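(* Let $u(z)=z+\sum_{n\ge1}u_nz^{n+1}\in\mathbb{C}[[z]]$. For every character $\varphi$ of $\mathcal H_{CK}$ (an algebra morphism $\mathcal H_{CK}\to\mathbb C$, so $\varphi(\emptyset)=1$), one has $$\alpha_u\Big(\sum_{t}\varphi(\mathrm{sk}(t))\,S^t\Big)=\sum_{T}\varphi(T)\,A_T(z),$$ where $t$ runs over reduced plane trees and $T$ over $\mathbb{N}^*$-decorated rooted trees (including the empty tree $\emptyset$). That is, $\alpha_u\circ\mathrm{sk}^*=\rho_u$, where $\mathrm{sk}^*(\varphi)=\varphi\circ\mathrm{sk}$ and $\rho_u(\varphi)(z)=\sum_T\varphi(T)A_T(z)$.
   Context: A reduced plane tree is a rooted plane tree in which every internal vertex has at least two children; $|$ denotes the single-leaf tree. The monomial $S^t$ in noncommuting variables $S_0,S_1,\dots$ is $S^{|}=S_0$ and $S^t=S_{n-1}S^{t_1}\cdots S^{t_n}$ if the root of $t$ has children subtrees $t_1,\dots,t_n$ ($n\ge2$). $\alpha_u$ sends a formal series $\sum_t c_tS^t$ to the formal power series $\sum_t c_t\,\alpha_u(S^t)\in\mathbb{C}[[z]]$, where $\alpha_u(S^t)$ is obtained by replacing $S_0$ by $z$ and $S_n$ by $u_n$ ($n\ge1$) in the commutative product. $\mathcal H_{CK}$ is the commutative polynomial algebra on the non-plane rooted trees with vertices decorated by positive integers (monomials are forests, unit the empty forest $\emptyset$); for a forest $F$, $B_n^+(F)$ is the tree with a new root decorated $n$ attached to the roots of $F$. The skeleton map is $\mathrm{sk}(|)=\emptyset$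 and $\mathrm{sk}(t)=B^+_{n-1}(\mathrm{sk}(t_1)\cdots\mathrm{sk}(t_n))$ if the root of $t$ has children subtrees $t_1,\dots,t_n$. The power series $A_T(z)$ are defined recursively: $A_\emptyset(z)=z$; $A_{B_n^+(\emptyset)}(z)=u_nz^{n+1}$; and if $T=B_n^+(T_1^{a_1}\cdots T_k^{a_k})$ with $T_1,\dots,T_k$ distinct nonempty decorated trees with multiplicities $a_1,\dots,a_k$, then $A_T(z)=\frac{1}{a_1!\cdots a_k!}A_{T_1}(z)^{a_1}\cdots A_{T_k}(z)^{a_k}\,\partial_z^{a_1+\cdots+a_k}\big(u_nz^{n+1}\big)$. *)

(* Defs.v *)
From HB Require Import structures.
From mathcomp Require Import all_boot all_order all_algebra.
From mathcomp Require Import boolp classical_sets cardinality fsbigop reals.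
From mathcomp Require Import complex.
Set Implicit Arguments. Unset Strict Implicit. Unset Printing Implicit Defensive.
Import Order.TTheory GRing.Theory Num.Theory.

Inductive ptree := PLeaf | PNode of seq ptree.

Fixpoint ptree_enc (t : ptree) : GenTree.tree unit :=
  match t with
  | PLeaf => GenTree.Node 0 [::]
  | PNode ts => GenTree.Node 1 (map ptree_enc ts)
  end.

Fixpoint ptree_dec (g : GenTree.tree unit) : ptree :=
  match g with
  | GenTree.Leaf _ => PLeaf
  | GenTree.Node 0 _ => PLeaf
  | GenTree.Node _ l => PNode (map ptree_dec l)
  end.

Fixpoint ptree_encK_aux (t : ptree) : ptree_dec (ptree_enc t) = t :=
  match t return ptree_dec (ptree_enc t) = t with
  | PLeaf => erefl
  | PNode ts =>
    f_equal PNode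
      ((fix aux (l : seq ptree) : map ptree_dec (map ptree_enc l) = l :=
         match l return map ptree_dec (map ptree_enc l) = l with
         | [::] => erefl
         | s :: l' => f_equal2 cons (ptree_encK_aux s) (aux l')
         end) ts)
  end.

Lemma ptree_encK : cancel ptree_enc ptree_dec.
Proof. exact: ptree_encK_aux. Qed.

HB.instance Definition _ := Countable.copy ptree (can_type ptree_encK).

Fixpoint reduced (t : ptree) : bool :=
  match t with
  | PLeaf => true
  | PNode ts => (1 < size ts) && all reduced ts
  end.

(* the noncommutative monomial S^t, encoded as the word of indices of the S_i:
   S^| = S_0,  S^t = S_{n-1} S^{t_1} ... S^{t_n} *)
Fixpoint Sword (t : ptree) : seq nat :=
  match t with
  | PLeaf => [:: 0]
  | PNode ts => (size ts).-1 :: flatten (map Sword ts)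
  end.

Inductive dtree := DNode of nat & seq dtree.

Fixpoint dtree_enc (t : dtree) : GenTree.tree unit :=
  match t with DNode n ts => GenTree.Node n (map dtree_enc ts) end.

Fixpoint dtree_dec (g : GenTree.tree unit) : dtree :=
  match g with
  | GenTree.Leaf _ => DNode 0 [::]
  | GenTree.Node n l => DNode n (map dtree_dec l)
  end.

Fixpoint dtree_encK_aux (t : dtree) : dtree_dec (dtree_enc t) = t :=
  match t return dtree_dec (dtree_enc t) = t with
  | DNode n ts =>
    f_equal (DNode n)
      ((fix aux (l : seq dtree) : map dtree_dec (map dtree_enc l) = l :=
         match l return map dtree_dec (map dtree_enc l) = l with
         | [::] => erefl
         | s :: l' => f_equal2 cons (dtree_encK_aux s) (aux l')
         end) ts)
  end.

Lemma dtree_encK : cancel dtree_enc dtree_dec.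
Proof. exact: dtree_encK_aux. Qed.

HB.instance Definition _ := Countable.copy dtree (can_type dtree_encK).

(* Non-plane decorated rooted trees are represented by canonical plane
   representatives: children lists (recursively) sorted by a fixed total order. *)
Definition dle (a b : dtree) : bool := (pickle a <= pickle b)%N.

Fixpoint canon (t : dtree) : dtree :=
  match t with DNode n ts => DNode n (sort dle (map canon ts)) end.

Fixpoint dpos (t : dtree) : bool :=
  match t with DNode n ts => (0 < n)%N && all dpos ts end.

Definition dvalid (t : dtree) : bool := dpos t && (canon t == t).

(* elements of {emptyset} U {decorated trees}: None = the empty tree/forest *)
Definition ovalid (o : option dtree) : bool :=
  if o is Some t then dvalid t else true.

Definition Bplus (n : nat) (F : seq dtree) : dtree := canon (DNode n F).

(* skeleton map: sk(|) = emptyset, sk(t) = B^+_{n-1}(sk(t_1)...sk(t_n)),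
   the empty forest being the unit of H_CK *)
Fixpoint sk (t : ptree) : option dtree :=
  match t with
  | PLeaf => None
  | PNode ts => Some (Bplus (size ts).-1 (pmap sk ts))
  end.

(* a character of H_CK is determined by arbitrary values on trees, and sends
   the empty forest (the unit) to 1 *)
Definition charE (C : pzRingType) (phi : dtree -> C) (o : option dtree) : C :=
  if o is Some t then phi t else 1.

Local Open Scope ring_scope.

Definition alpha (C : comNzRingType) (u : nat -> C) (w : seq nat) : {poly C} :=
  \prod_(i <- w) (if i == 0%N then 'X else (u i)%:P).

Fixpoint Atree (C : fieldType) (u : nat -> C) (t : dtree) : {poly C} :=
  match t with
  | DNode n ts =>
    ((\prod_(s <- undup ts) (count_mem s ts)`!)%:R)^-1 *:
      ((\prod_(p <- map (Atree u) ts) p) * ((u n)%:P * 'X^(n.+1))^`(size ts))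
  end.

Definition A (C : fieldType) (u : nat -> C) (o : option dtree) : {poly C} :=
  if o is Some t then Atree u t else 'X.

(* Main.v *)
Require Import Defs.
From HB Require Import structures.
From mathcomp Require Import all_boot all_order all_algebra.
From mathcomp Require Import boolp classical_sets cardinality fsbigop reals.
From mathcomp Require Import complex.
From mathcomp Require Import ring.
Import Order.TTheory GRing.Theory Num.Theory.
Set Implicit Arguments. Unset Strict Implicit. Unset Printing Implicit Defensive.
Local Open Scope ring_scope.

Fixpoint prodseq (T : Type) (ls : seq (seq T)) : seq (seq T) :=
  if ls is l :: ls' then [seq x :: s | x <- l, s <- prodseq ls'] else [:: [::]].

Lemma mem_prodseq (T : eqType) (ls : seq (seq T)) s :
  (s \in prodseq ls) = all2 (fun x l => x \in l) s ls.
Proof.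
elim: ls s => [|l ls IH] [|x s] //=.
- apply/negbTE/negP => /allpairsP [[a b] /= [_ _]] //.
- apply/allpairsP/andP => [[[a b] /= [ha hb [-> ->]]]|[hx hs]].
  by rewrite ha -IH.
  by exists (x, s); split => //=; rewrite IH.
Qed.

Lemma prodseq_uniq (T : eqType) (ls : seq (seq T)) :
  all uniq ls -> uniq (prodseq ls).
Proof.
elim: ls => [|l ls IH] //= /andP [ul uls].
apply: allpairs_uniq => //; first exact: IH.
by move=> [a b] [c d] _ _ /= [-> ->].
Qed.

Lemma sum_prodseq (C : comNzRingType) (T : Type) (f : T -> C) (ls : seq (seq T)) :
  \sum_(s <- prodseq ls) \prod_(x <- s) f x = \prod_(l <- ls) \sum_(x <- l) f x.
Proof.
elim: ls => [|l ls IH] /=; first by rewrite !big_cons !big_nil addr0.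
rewrite big_allpairs_dep big_cons mulr_suml; apply: eq_bigr => x _.
by rewrite -IH mulr_sumr; apply: eq_bigr => s _; rewrite big_cons.
Qed.

Local Close Scope ring_scope.
Lemma count_rem_split (T : eqType) (x y : T) (s : seq T) : x \in s ->
  count_mem y s = (x == y) + count_mem y (rem x s).
Proof.
move=> xs; rewrite (permP (perm_to_rem xs)) /=; by rewrite eq_sym.
Qed.

Lemma prodfact_rem (T : eqType) (U s : seq T) (x : T) :
  uniq U -> x \in U -> x \in s ->
  \prod_(y <- U) (count_mem y s)`! =
  (count_mem x s * \prod_(y <- U) (count_mem y (rem x s))`!)%N.
Proof.
move=> uU xU xs; rewrite (bigD1_seq x) //= [in RHS](bigD1_seq x) //=.
rewrite (count_rem_split x xs) eqxx add1n factS mulnA; congr (_ * _)%N.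
apply: eq_bigr => y /negbTE yx; by rewrite (count_rem_split y xs) eq_sym yx.
Qed.

Lemma multinom (T : eqType) (U : seq T) (n : nat) (s : seq T) :
  uniq U -> {subset s <= U} -> size s = n ->
  (size (permutations s) * \prod_(y <- U) (count_mem y s)`!)%N = n`!.
Proof.
move=> uU; elim: n s => [|n IH] s sU sz.
  case: s sz sU => // _ _; rewrite big1_seq //= => y _; by rewrite fact0.
have s0 : (0 < size s)%N by rewrite sz.
rewrite (perm_size (permutationsE s0)) size_allpairs_dep.
rewrite sumnE big_map big_distrl /=.
transitivity (\sum_(x <- undup s) (count_mem x s * n`!))%N.
  rewrite [LHS]big_seq [RHS]big_seq; apply: eq_bigr => x; rewrite mem_undup => xs.
  rewrite (prodfact_rem uU (sU x xs) xs) mulnCA IH //.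
  - by move=> y /mem_rem /sU.
  - by rewrite size_rem // sz.
rewrite -big_distrl /= factS; congr (_ * _)%N.
rewrite -sz -(perm_size (perm_count_undup s)) size_flatten sumnE /shape.
by rewrite -map_comp big_map; apply: eq_bigr => x _; rewrite /= size_nseq.
Qed.

Lemma in_nil_F (T : eqType) (s : T) : s \in [::] -> False. Proof. by []. Qed.
Lemma in_cons_neq (T : eqType) (s a : T) l : s \in a :: l -> s <> a -> s \in l.
Proof. by rewrite inE => /orP [/eqP ->|//]. Qed.

Section PInd.
Variable P : ptree -> Prop.
Hypothesis hL : P PLeaf.
Hypothesis hN : forall ts, (forall t, t \in ts -> P t) -> P (PNode ts).
Fixpoint pind (t : ptree) : P t :=
  match t with
  | PLeaf => hL
  | PNode ts => hN
     ((fix aux (l : seq ptree) : forall s, s \in l -> P s :=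
        match l with
        | [::] => fun s hs => False_ind (P s) (in_nil_F hs)
        | a :: l' => fun s hs =>
            match s =P a with
            | ReflectT e => eq_ind a P (pind a) s (esym e)
            | ReflectF ne => aux l' s (in_cons_neq hs ne)
            end
        end) ts)
  end.
End PInd.

Section DInd.
Variable P : dtree -> Prop.
Hypothesis hN : forall n ts, (forall t, t \in ts -> P t) -> P (DNode n ts).
Fixpoint dind (t : dtree) : P t :=
  match t with
  | DNode n ts => hN n
     ((fix aux (l : seq dtree) : forall s, s \in l -> P s :=
        match l with
        | [::] => fun s hs => False_ind (P s) (in_nil_F hs)
        | a :: l' => fun s hs =>
            match s =P a with
            | ReflectT e => eq_ind a P (dind a) s (esym e)
            | ReflectF ne => aux l' s (in_cons_neq hs ne)
            end
        end) ts)
  end.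
End DInd.

Lemma dle_total : total dle. Proof. by move=> a b; exact: leq_total. Qed.
Lemma dle_trans : transitive dle. Proof. by move=> b a c; exact: leq_trans. Qed.
Lemma dle_anti : antisymmetric dle.
Proof. by move=> a b /andP [h1 h2]; apply: (pcan_inj (@pickleK dtree)); apply/eqP; rewrite eqn_leq; apply/andP; split. Qed.

Lemma canon_idem (t : dtree) : Defs.canon (Defs.canon t) = Defs.canon t.
Proof.
elim/dind: t => n ts IH /=; congr DNode.
rewrite map_id_in; last by move=> x; rewrite mem_sort => /mapP [y yts ->]; rewrite IH.
by rewrite sorted_sort //; [exact: dle_trans | apply: (@sort_sorted _ dle); exact: dle_total].
Qed.

Lemma dpos_canon (t : dtree) : dpos (Defs.canon t) = dpos t.
Proof.
elim/dind: t => n ts IH /=; rewrite all_sort all_map; congr andb.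
by apply: eq_in_all => x /IH.
Qed.

Lemma dvalid_canon (c : dtree) : dvalid c -> Defs.canon c = c.
Proof. by case/andP => _ /eqP. Qed.

Lemma sk_valid (t : ptree) : reduced t -> ovalid (sk t).
Proof.
elim/pind: t => // ts IH /= /andP [sz rts].
rewrite /dvalid /Bplus canon_idem eqxx andbT dpos_canon /=.
apply/andP; split; first by case: ts sz {IH rts} => [|a [|b l]].
apply/allP => x; rewrite mem_pmap => /mapP [t tts e].
have := IH t tts (allP rts t tts); rewrite -e /= => /andP [].
by [].
Qed.

Lemma sk_None (t : ptree) : reduced t -> (sk t == None) = (t == PLeaf).
Proof. by case: t. Qed.

Definition leaves (t : ptree) := count_mem 0%N (Sword t).

Lemma leaves_node (ts : seq ptree) : reduced (PNode ts) ->
  leaves (PNode ts) = \sum_(t <- ts) leaves t.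
Proof.
case/andP => sz _; rewrite /leaves /=.
have -> : ((size ts).-1 == 0%N) = false by case: ts sz => [|a [|b l]].
by rewrite add0n count_flatten sumnE big_map big_map.
Qed.

Lemma leaves_pos (t : ptree) : reduced t -> (0 < leaves t)%N.
Proof.
elim/pind: t => // ts IH rt; rewrite leaves_node //.
case/andP: rt => sz rts; case: ts sz rts IH => // a l _ /andP [ra _] IH.
by rewrite big_cons; apply: ltn_addr; apply: IH => //; rewrite mem_head.
Qed.

Lemma leaves_child (ts : seq ptree) (t : ptree) : reduced (PNode ts) -> t \in ts ->
  (leaves t < leaves (PNode ts))%N.
Proof.
move=> rt tts; rewrite leaves_node // (big_rem t tts) /= -addn1 leq_add2l.
case/andP: rt => sz /allP rts.
have : (0 < size (rem t ts))%N by rewrite size_rem //; case: ts sz {rts tts} => [|a [|b l]].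
case E: (rem t ts) => [|b l] //= _; rewrite big_cons; apply: ltn_addr.
apply: leaves_pos; apply: rts; apply: (mem_rem (x:=t)); by rewrite E mem_head.
Qed.

Lemma size_le_leaves (ts : seq ptree) : reduced (PNode ts) ->
  (size ts <= leaves (PNode ts))%N.
Proof.
move=> rt; rewrite leaves_node // -sum1_size big_seq_cond [X in (_ <= X)%N]big_seq_cond.
apply: leq_sum => t /andP [tts _]; apply: leaves_pos.
by case/andP: rt => _ /allP; apply.
Qed.

Local Open Scope ring_scope.

Lemma alpha_shape (C : comNzRingType) (u : nat -> C) (w : seq nat) :
  alpha u w = (\prod_(i <- w | i != 0%N) u i)%:P * 'X^(count_mem 0%N w).
Proof.
rewrite /alpha; elim: w => [|a w IH]; first by rewrite !big_nil mul1r.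
rewrite !big_cons IH /=; case: eqP => [->|_] /=.
  by rewrite add1n exprS mulrCA.
by rewrite add0n polyCM mulrA.
Qed.

Lemma coef_alpha (C : comNzRingType) (u : nat -> C) (w : seq nat) k :
  (alpha u w)`_k = if count_mem 0%N w == k then \prod_(i <- w | i != 0%N) u i else 0.
Proof.
rewrite alpha_shape coefCM coefXn eq_sym; case: eqP => _; by rewrite ?mulr1 ?mulr0.
Qed.

Lemma alpha_node (C : comNzRingType) (u : nat -> C) (ts : seq ptree) :
  alpha u (Sword (PNode ts)) =
  (if (size ts).-1 == 0%N then 'X else (u (size ts).-1)%:P) *
  \prod_(t <- ts) alpha u (Sword t).
Proof. by rewrite /alpha /= big_cons big_flatten /= big_map. Qed.

Local Close Scope ring_scope.

Fixpoint rt (k f : nat) : seq ptree :=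
  if f is f'.+1 then
    PLeaf :: flatten [seq map PNode (prodseq (nseq l (rt k f'))) | l <- iota 2 k]
  else [::].

Lemma all2_nseq (T : eqType) (s : seq T) (L : seq T) :
  all (fun x => x \in L) s -> all2 (fun x l => x \in l) s (nseq (size s) L).
Proof. by elim: s => //= x s IH /andP [-> /IH]. Qed.

Lemma rt_complete k f (t : ptree) : reduced t -> leaves t <= f -> leaves t <= k ->
  t \in rt k f.
Proof.
elim: f t => [|f IH] t red lf lk.
  by have := leaves_pos red; rewrite leqNgt; move: lf; rewrite leqn0 => /eqP ->.
case: t red lf lk => [|ts] red lf lk /=; first by rewrite mem_head.
rewrite inE /=; apply/flatten_mapP; exists (size ts).
  rewrite mem_iota; have := size_le_leaves red; case/andP: (red) => sz _.
  by move=> h; rewrite sz /= addnC addn2 ltnS; apply: leq_trans (leq_trans h lk) _.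
apply: map_f; rewrite mem_prodseq; apply: all2_nseq; apply/allP => x xts.
have lt := leaves_child red xts.
apply: IH; first by case/andP: red => _ /allP; apply.
  by rewrite -ltnS (leq_trans lt lf).
by rewrite (leq_trans (ltnW lt) lk).
Qed.

Definition Lf (cs : seq dtree) (pl : seq (seq ptree)) (y : option dtree) : seq ptree :=
  if y is Some c then nth [::] pl (index c cs) else [:: PLeaf].

Definition mseq (n : nat) (cs : seq dtree) : seq (option dtree) :=
  nseq (n.+1 - size cs) None ++ map Some cs.

Fixpoint plane (T : dtree) : seq ptree :=
  match T with DNode n cs =>
    if size cs <= n.+1 then
      flatten [seq map PNode (prodseq (map (Lf cs (map plane cs)) r))
              | r <- permutations (mseq n cs)]
    else [::]
  end.

Lemma planeE n cs : plane (DNode n cs) =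
    if size cs <= n.+1 then
      flatten [seq map PNode (prodseq (map (Lf cs (map plane cs)) r))
              | r <- permutations (mseq n cs)]
    else [::].
Proof. by []. Qed.

Lemma Lf_Some cs c : c \in cs -> Lf cs (map plane cs) (Some c) = plane c.
Proof.
move=> ccs; rewrite /= (nth_map (DNode 0 [::])) ?index_mem // nth_index //.
Qed.

Lemma valid_children n cs : dvalid (DNode n cs) ->
  [/\ 0 < n, forall c, c \in cs -> dvalid c & sort dle cs = cs].
Proof.
case/andP => /= /andP [n0 pcs] /eqP [e].
have cc : forall c, c \in cs -> Defs.canon c = c.
  move=> c; rewrite -{1}e mem_sort => /mapP [y _ ->]; exact: canon_idem.
split => //.
  move=> c ccs; rewrite /dvalid (allP pcs c ccs) /= cc //.
by rewrite -{2}e map_id_in // => c /cc.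
Qed.

Lemma perm_opt (X : eqType) (s : seq (option X)) :
  perm_eq s (nseq (count_mem None s) None ++ map Some (pmap id s)).
Proof.
elim: s => [|[x|] s IH] //=.
  rewrite add0n perm_sym -cat1s perm_catCA /= perm_cons perm_sym //.
by rewrite add0n perm_cons.
Qed.

Lemma pmap_id_map (X Y : Type) (f : X -> option Y) s : pmap id (map f s) = pmap f s.
Proof. by elim: s => //= x s ->; case: (f x). Qed.

Lemma skPNode ts : all reduced ts ->
  sk (PNode ts) = Some (DNode (size ts).-1 (sort dle (pmap sk ts))).
Proof.
move=> /allP rts /=; congr Some; rewrite /Bplus /=; congr DNode; congr sort.
apply: map_id_in => x; rewrite mem_pmap => /mapP [t tts e].
have := sk_valid (rts t tts); rewrite -e /=; exact: dvalid_canon.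
Qed.

Lemma sort_perm_eq (s cs : seq dtree) : sort dle cs = cs ->
  (sort dle s == cs) = perm_eq s cs.
Proof.
move=> scs; apply/eqP/idP => [<-|h].
  by rewrite perm_sym perm_sort.
rewrite -scs; apply/perm_sortP => //; [exact: dle_total|exact: dle_trans|exact: dle_anti].
Qed.

Lemma mem_Lf_prodseq n cs (r : seq (option dtree)) (ts : seq ptree) :
  (forall c, c \in cs -> forall t, (t \in plane c) = reduced t && (sk t == Some c)) ->
  {subset r <= mseq n cs} ->
  (ts \in prodseq (map (Lf cs (map plane cs)) r)) = all reduced ts && (map sk ts == r).
Proof.
move=> IH; rewrite mem_prodseq; elim: ts r => [|t ts IHt] [|y r] rsub //=; first by rewrite andbF.
rewrite eqseq_cons.
have -> : reduced t && all reduced ts && ((sk t == y) && (map sk ts == r)) =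
  (reduced t && (sk t == y)) && (all reduced ts && (map sk ts == r)).
  by case: (reduced t); case: (sk t == y); case: (all reduced ts).
congr andb; last by apply: IHt => z zr; apply: rsub; rewrite inE zr orbT.
have : y \in mseq n cs by apply: rsub; rewrite mem_head.
rewrite mem_cat => /orP [/nseqP [-> _]|].
  by case: t => [|ts'] /=; rewrite ?inE //= andbF.
by case/mapP => c ccs ->; rewrite Lf_Some // IH.
Qed.

Lemma pmap_Some (X : Type) (s : seq X) : pmap Some s = s.
Proof. by elim: s => //= x s ->. Qed.

Lemma PNode_inj : injective PNode. Proof. by move=> a b [->]. Qed.

Lemma size_mseq n cs : size cs <= n.+1 -> size (mseq n cs) = n.+1.
Proof. by move=> h; rewrite /mseq size_cat size_nseq size_map subnK. Qed.

Lemma pmap_mseq n cs : pmap id (mseq n cs) = cs.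
Proof.
rewrite /mseq pmap_cat pmap_id_map pmap_Some.
by elim: (n.+1 - size cs) => //.
Qed.

Lemma plane_mem (T : dtree) : dvalid T ->
  forall t, (t \in plane T) = reduced t && (sk t == Some T).
Proof.
elim/dind: T => n cs IH vT; have [n0 vc scs] := valid_children vT.
have IH' : forall c, c \in cs -> forall t, (t \in plane c) = reduced t && (sk t == Some c).
  by move=> c ccs; apply: IH => //; apply: vc.
move=> t; rewrite planeE; case: leqP => hsz; last first.
  rewrite in_nil; case: t => [|ts] //; apply/esym/negbTE/negP => /andP [/andP [_ rts]].
  rewrite (skPNode rts) => /eqP [e1 e]; move: hsz; rewrite -e size_sort.
  rewrite size_pmap ltnNge => /negP; apply; apply: leq_trans (count_size _ _) _.
  by rewrite -e1; case: (size ts).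
case: t => [|ts].
  apply/negbTE/negP => /flatten_mapP [r _ /mapP [ts _ E]] //.
apply/flatten_mapP/idP => [[r rp]|].
  rewrite mem_map; last exact: PNode_inj.
  have rsub : {subset r <= mseq n cs} by move=> y; rewrite -(perm_mem (_ : perm_eq r (mseq n cs))) // -mem_permutations.
  rewrite (mem_Lf_prodseq (n:=n)) // => /andP [rts /eqP e]; move: rp; rewrite -e mem_permutations => pe.
  have szts : size ts = n.+1 by rewrite -(size_map sk) (perm_size pe) size_mseq.
  rewrite (skPNode rts) szts /= rts szts ltnS n0 /=.
  have := perm_pmap id pe; rewrite pmap_id_map pmap_mseq => pe'.
  by rewrite -(sort_perm_eq _ scs) in pe'; rewrite (eqP pe').
case/andP => /andP [sz rts]; rewrite (skPNode rts) => /eqP [e1 e2].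
have szts : size ts = n.+1 by rewrite -e1 prednK // ltnW.
have pe : perm_eq (pmap sk ts) cs by rewrite -(sort_perm_eq _ scs) e2.
have pm : perm_eq (map sk ts) (mseq n cs).
  apply: perm_trans (perm_opt _) _; rewrite pmap_id_map /mseq.
  have -> : count_mem None (map sk ts) = n.+1 - size cs.
    rewrite -(perm_size pe) size_pmap -szts -(size_map sk ts) -(count_predC (pred1 None)).
    have -> : count (predC (pred1 None)) (map sk ts) = count [eta sk] ts.
      by rewrite count_map; apply: eq_count => x /=; case: (sk x).
    by rewrite addnK count_map.
  by rewrite perm_cat2l perm_map.
exists (map sk ts); first by rewrite mem_permutations.
rewrite mem_map; last exact: PNode_inj.
rewrite (mem_Lf_prodseq (n:=n)) //; first by rewrite rts eqxx.
by move=> y; rewrite (perm_mem pm).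
Qed.

Lemma uniq_flatten_map (X Y : eqType) (g : X -> seq Y) (s : seq X) :
  uniq s -> (forall x, x \in s -> uniq (g x)) ->
  (forall x x' y, x \in s -> x' \in s -> y \in g x -> y \in g x' -> x = x') ->
  uniq (flatten (map g s)).
Proof.
elim: s => //= x s IH /andP [xs us] ug dj; rewrite cat_uniq ug ?mem_head //=.
rewrite IH //; last first.
- by move=> a b y ha hb; apply: dj; rewrite inE ?ha ?hb orbT.
- by move=> a ha; apply: ug; rewrite inE ha orbT.
rewrite andbT; apply/hasPn => y /flatten_mapP [x' x's yx'] /=; apply/negP => yx.
have x'in : x' \in x :: s by rewrite inE x's orbT.
have e := dj x x' y (mem_head _ _) x'in yx yx'.
by move: xs; rewrite e x's.
Qed.

Lemma plane_uniq (T : dtree) : dvalid T -> uniq (plane T).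
Proof.
elim/dind: T => n cs IH vT; have [n0 vc scs] := valid_children vT.
have IH' : forall c, c \in cs -> forall t, (t \in plane c) = reduced t && (sk t == Some c).
  by move=> c ccs; apply: plane_mem; apply: vc.
rewrite planeE; case: leqP => hsz //.
have rsub : forall r, r \in permutations (mseq n cs) -> {subset r <= mseq n cs}.
  by move=> r; rewrite mem_permutations => pe y; rewrite (perm_mem pe).
apply: uniq_flatten_map; first exact: permutations_uniq.
  move=> r rp; rewrite map_inj_uniq; last exact: PNode_inj.
  apply: prodseq_uniq; apply/allP => l /mapP [y yr ->].
  have := rsub r rp y yr; rewrite mem_cat => /orP [/nseqP [-> _] //|].
  by case/mapP => c ccs ->; rewrite Lf_Some //; apply: IH => //; apply: vc.
move=> r r' y rp rp' /mapP [ts tsp ->] /mapP [ts' tsp' /PNode_inj e].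
move: tsp tsp'; rewrite !(mem_Lf_prodseq (n:=n)) ?e; try by apply: rsub.
  by move=> /andP [_ /eqP <-] /andP [_ /eqP <-].
all: exact: IH'.
Qed.

Lemma count_mseq_None n cs : count_mem None (mseq n cs) = n.+1 - size cs.
Proof.
rewrite /mseq count_cat count_nseq /= mul1n count_map.
by rewrite (@eq_count _ _ pred0) ?count_pred0 ?addn0.
Qed.

Lemma count_mseq_Some n cs c : count_mem (Some c) (mseq n cs) = count_mem c cs.
Proof.
rewrite /mseq count_cat count_nseq /= mul0n add0n count_map.
by apply: eq_count => x /=; rewrite (inj_eq (@Some_inj _)).
Qed.

Lemma perms_count n cs : size cs <= n.+1 ->
  (size (permutations (mseq n cs)) * \prod_(s <- undup cs) (count_mem s cs)`!)%N
  = (n.+1) ^_ (size cs).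
Proof.
move=> hsz.
have U1 : uniq (None :: map Some (undup cs)).
  rewrite /= map_inj_uniq ?undup_uniq ?andbT; last by move=> a b [->].
  by apply/negP => /mapP [].
have U2 : {subset mseq n cs <= None :: map Some (undup cs)}.
  move=> y; rewrite mem_cat => /orP [/nseqP [-> _]|/mapP [c ccs ->]]; first by rewrite mem_head.
  by rewrite inE /= map_f // mem_undup.
have := multinom U1 U2 (size_mseq hsz).
rewrite big_cons big_map count_mseq_None.
rewrite (eq_bigr (fun s => (count_mem s cs)`!)); last by move=> c _; rewrite count_mseq_Some.
rewrite -(ffact_fact hsz) mulnCA => /eqP; rewrite [X in _ == X]mulnC eqn_pmul2l ?fact_gt0 //.
by move=> /eqP.
Qed.

Local Open Scope ring_scope.
Lemma prod_nseq (C : comNzRingType) (F : option dtree -> C) k a :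
  \prod_(i <- nseq k a) F i = F a ^+ k.
Proof. by elim: k => [|k IH]; rewrite ?big_nil ?expr0 // big_cons IH exprS. Qed.

Lemma sum_const_seq (C : comNzRingType) (X : Type) (r : seq X) (K : C) :
  \sum_(i <- r) K = K *+ size r.
Proof. by elim: r => [|x r IH]; rewrite ?big_nil ?mulr0n // big_cons IH mulrS. Qed.


Lemma plane_sum (C : numFieldType) (u : nat -> C) (T : dtree) : dvalid T ->
  Atree u T = \sum_(t <- plane T) alpha u (Sword t).
Proof.
elim/dind: T => n cs IH vT; have [n0 vc scs] := valid_children vT.
have IH' : forall c, c \in cs -> forall t, (t \in plane c) = reduced t && (sk t == Some c).
  by move=> c ccs; apply: plane_mem; apply: vc.
rewrite planeE [LHS]/=.
have -> : \prod_(p <- map (Atree u) cs) p =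
    \prod_(c <- cs) \sum_(t <- plane c) alpha u (Sword t).
  by rewrite big_map; apply: eq_big_seq => c ccs; apply: IH => //; apply: vc.
set Q := \prod_(c <- cs) _.
set P := (\prod_(s <- undup cs) _)%N.
rewrite mul_polyC derivnZ derivnXn.
case: leqP => hsz; last by rewrite ffact_small // mulr0n scaler0 mulr0 scaler0 big_nil.
set M := 'X^(n.+1 - size cs).
rewrite big_flatten /= big_map.
transitivity (\sum_(r <- permutations (mseq n cs)) ((u n)%:P * (M * Q))).
  rewrite sum_const_seq.
  have hP : (P%:R : C) != 0 by rewrite pnatr_eq0 -lt0n prodn_gt0 // => i; exact: fact_gt0.
  have hF : ((n.+1) ^_ (size cs))%:R = (size (permutations (mseq n cs)))%:R * (P%:R : C).
    by rewrite -natrM perms_count.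
  rewrite -!mul_polyC -[M *+ _]mulr_natr -[_ *+ size _]mulr_natr.
  rewrite -[(_ ^_ _)%:R]polyC_natr -[(size _)%:R]polyC_natr hF polyCM.
  set x := (P%:R : C); set S := (size _)%:R.
  have E : (x^-1)%:P * x%:P = 1 by rewrite -polyCM mulVf.
  transitivity (((x^-1)%:P * x%:P) * ((u n)%:P * (M * Q) * S%:P)); first by ring.
  by rewrite E mul1r.
apply: eq_big_seq => r rp; apply/esym; rewrite big_map.
have pe : perm_eq r (mseq n cs) by rewrite -mem_permutations.
have rsub : {subset r <= mseq n cs} by move=> y; rewrite (perm_mem pe).
transitivity (\sum_(ts <- prodseq (map (Lf cs (map plane cs)) r))
                (u n)%:P * \prod_(t <- ts) alpha u (Sword t)).
  rewrite [LHS]big_seq [RHS]big_seq; apply: eq_bigr => ts tsp.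
  move: tsp; rewrite (mem_Lf_prodseq (n:=n)) // => /andP [_ /eqP e].
  have szts : size ts = n.+1 by rewrite -(size_map sk) e (perm_size pe) size_mseq.
  by rewrite alpha_node szts /= gtn_eqF.
rewrite -mulr_sumr sum_prodseq big_map; congr (_ * _).
rewrite (perm_big _ pe) /mseq big_cat big_map prod_nseq /=.
rewrite big_seq1 /alpha /= big_seq1 /=; congr (_ * _).
by apply: eq_big_seq => c ccs; have := Lf_Some ccs => /= ->.
Qed.

Definition PT (o : option dtree) : seq ptree :=
  if o is Some T then plane T else [:: PLeaf].

Lemma PT_mem (o : option dtree) : ovalid o ->
  forall t, (t \in PT o) = reduced t && (sk t == o).
Proof.
case: o => [T|] vT t /=; first exact: plane_mem.
rewrite mem_seq1; case: t => [|ts]; first by rewrite eqxx.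
by rewrite /= andbF; apply/eqP.
Qed.

Lemma PT_uniq (o : option dtree) : ovalid o -> uniq (PT o).
Proof. by case: o => [T|] //= vT; apply: plane_uniq. Qed.

Lemma A_sum (C : numFieldType) (u : nat -> C) (o : option dtree) : ovalid o ->
  A u o = \sum_(t <- PT o) alpha u (Sword t).
Proof.
case: o => [T|] /= vT; first exact: plane_sum.
by rewrite big_seq1 /alpha /= big_seq1.
Qed.

Lemma coef_alpha_leaves (C : comNzRingType) (u : nat -> C) t k :
  (alpha u (Sword t))`_k != 0 -> leaves t = k.
Proof. by rewrite coef_alpha /leaves; case: (count_mem 0%N (Sword t) =P k) => // _; rewrite eqxx. Qed.

Local Open Scope classical_set_scope.

Theorem mainTheorem9 (R : realType) (u : nat -> R[i]) (phi : dtree -> R[i])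
    (k : nat) :
  finite_set [set t : ptree | reduced t /\
                (charE phi (sk t) * (alpha u (Sword t))`_k != 0)] /\
  finite_set [set T : option dtree | ovalid T /\
                (charE phi T * (A u T)`_k != 0)] /\
  \sum_(t \in [set t : ptree | reduced t]) charE phi (sk t) * (alpha u (Sword t))`_k
  = \sum_(T \in [set T : option dtree | ovalid T]) charE phi T * (A u T)`_k.
Proof.
set F := fun t => charE phi (sk t) * (alpha u (Sword t))`_k.
set G := fun T => charE phi T * (A u T)`_k.
set r1 := [seq t <- undup (rt k k) | reduced t && (leaves t == k)].
set r2 := undup (None :: map sk r1).
have r1P : forall t, (t \in r1) = reduced t && (leaves t == k).
  move=> t; rewrite mem_filter mem_undup; apply/andP/idP => [[]//|h]; split => //.
  by case/andP: h => red /eqP lk; apply: rt_complete => //; rewrite lk.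
have ur1 : uniq r1 by rewrite filter_uniq // undup_uniq.
have ur2 : uniq r2 by rewrite undup_uniq.
have Fz : forall t, reduced t -> t \notin r1 -> F t = 0.
  move=> t red; rewrite r1P red /=; apply: contraNeq => Fn; apply/eqP.
  by apply: (@coef_alpha_leaves _ u); move: Fn; rewrite /F; apply: contraNneq => ->; rewrite mulr0.
have coefA : forall T, ovalid T -> (A u T)`_k != 0 -> T \in r2.
  move=> T vT; rewrite (A_sum _ vT) coef_sum => nz.
  have [t tP atk] : exists2 t, t \in PT T & (alpha u (Sword t))`_k != 0.
    case: (boolP (has (fun t => (alpha u (Sword t))`_k != 0) (PT T))) => [/hasP [t tP h]|/hasPn h].
      by exists t.
    by move: nz; rewrite big1_seq ?eqxx // => t /andP [_ /h]; rewrite negbK => /eqP.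
  move: tP; rewrite PT_mem // => /andP [red /eqP skt].
  have tr1 : t \in r1 by rewrite r1P red /= (coef_alpha_leaves atk).
  by rewrite mem_undup inE -skt map_f ?orbT.
have r2v : forall T, T \in r2 -> ovalid T.
  move=> T; rewrite mem_undup inE => /orP [/eqP -> //|/mapP [t tr1 ->]].
  by apply: sk_valid; move: tr1; rewrite r1P => /andP [].
have Gz : forall T, ovalid T -> T \notin r2 -> G T = 0.
  move=> T vT nT; case: (eqVneq ((A u T)`_k) 0) => [e|nz]; first by rewrite /G e mulr0.
  by rewrite coefA in nT.
split.
  apply: (@sub_finite_set _ _ [set` r1]) => // t /= [red Fn].
  case: (boolP (t \in r1)) => // nt; move: Fn; by rewrite -/(F t) Fz // eqxx.
split.
  apply: (@sub_finite_set _ _ [set` r2]) => // T /= [vT Gn].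
  case: (boolP (T \in r2)) => // nt; move: Gn; by rewrite -/(G T) Gz // eqxx.
have s1 : [set` r1] `<=` [set t | reduced t] by move=> t /=; rewrite r1P => /andP [].
have z1 : forall t, [set t | reduced t] t -> t \notin r1 -> F t = 0.
  by move=> t /= red nt; apply: Fz.
have s2 : [set` r2] `<=` [set T | ovalid T] by move=> T /= /r2v.
have z2 : forall T, [set T | ovalid T] T -> T \notin r2 -> G T = 0.
  by move=> T /= vT nT; apply: Gz.
rewrite (fsbigE r1 _ ur1 s1 z1) (fsbigE r2 _ ur2 s2 z2).
have -> : \sum_(i <- r1 | i \in [set t | reduced t]) F i = \sum_(i <- r1) F i.
  rewrite big_seq_cond [RHS]big_seq; apply: eq_bigl => t.
  case tin: (t \in r1) => //=; apply/mem_set; by move: tin; rewrite r1P => /andP [].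
have -> : \sum_(i <- r2 | i \in [set T | ovalid T]) G i = \sum_(i <- r2) G i.
  rewrite big_seq_cond [RHS]big_seq; apply: eq_bigl => T.
  case tin: (T \in r2) => //=; apply/mem_set; exact: r2v.
have GT : forall T, T \in r2 -> G T = \sum_(t <- r1 | sk t == T) F t.
  move=> T Tr2; have vT := r2v T Tr2.
  rewrite /G (A_sum _ vT) coef_sum mulr_sumr.
  transitivity (\sum_(t <- PT T | leaves t == k) F t).
    rewrite [RHS]big_mkcond [LHS]big_seq [RHS]big_seq; apply: eq_bigr => t tP.
    move: tP; rewrite PT_mem // => /andP [red /eqP skt].
    rewrite /F skt; case: eqP => [//|nk].
    have : (alpha u (Sword t))`_k == 0.
      by apply: contraT => h; case: nk; apply: coef_alpha_leaves h.
    by move=> /eqP e; rewrite e mulr0.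
  rewrite -[LHS]big_filter -[RHS]big_filter; apply: perm_big; apply: uniq_perm.
  - by rewrite filter_uniq // PT_uniq.
  - by rewrite filter_uniq.
  - move=> t; rewrite mem_filter PT_mem // [RHS]mem_filter r1P.
    by case: (leaves t == k); case: (reduced t); case: (sk t == T).
transitivity (\sum_(T <- r2) \sum_(t <- r1) (if sk t == T then F t else 0)); last first.
  by apply: eq_big_seq => T Tr2; rewrite (GT T Tr2) [RHS]big_mkcond.
rewrite exchange_big; apply: eq_big_seq => t tr1.
have skr2 : sk t \in r2 by rewrite mem_undup inE map_f ?orbT.
rewrite (bigD1_seq (sk t)) //= eqxx big1 ?addr0 // => T /negbTE.
by rewrite eq_sym => ->.
Qed.
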